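(* Let $\mathbf{S}=[\mathbf{s}_1,\dots,\mathbf{s}_K]^T\in\mathbb{R}^{K\times 3}$ collect the user positions, and let $F_{\mathsf{P}}$ denote the beamforming policy, i.e., the map assigning to $\mathbf{S}$ the coefficient matrix $\mathbf{B}=[b_{jk}]\in\mathbb{C}^{K\times K}$ of the optimal beamforming $\mathsf{V}_k(\mathbf{r})=\sum_{j=1}^K b_{jk}\mathsf{H}_j^*(\mathbf{r})$, $k=1,\dots,K$, of the problem \[ \max_{\mathsf{V}_1,\dots,\mathsf{V}_K}\ \sum_{k=1}^K \log_2\!\left(1+\frac{A\left|\int_{\mathcal{A}}\mathsf{H}_k(\mathbf{r})\mathsf{V}_k(\mathbf{r})\,d\mathbf{r}\right|^2}{\sum_{j\neq k}A\left|\int_{\mathcal{A}}\mathsf{H}_k(\mathbf{r})\mathsf{V}_j(\mathbf{r})\,d\mathbf{r}\right|^2+\sigma_0^2}\right)\quad\text{s.t.}\quad \sum_{k=1}^K\int_{\mathcal{A}}|\mathsf{V}_k(\mathbf{r})|^2d\mathbf{r}=P_{\max}. \] Then for every $K\times K$ permutation matrix $\boldsymbol{\Pi}$, if $\mathbf{B}=F_{\mathsf{P}}(\mathbf{S})$ then $\boldsymbol{\Pi}^T\mathbf{B}\boldsymbol{\Pi}=F_{\mathsf{P}}(\boldsymbol{\Pi}^T\mathbf{S})$.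
   Context: A base station with a continuous aperture array occupying $\mathcal{A}\subseteq\mathbb{R}^3$ serves $K$ users; user $k$'s aperture is centered at $\mathbf{s}_k\in\mathbb{R}^3$. All users have the same aperture area $A>0$ and the same noise variance $\sigma_0^2>0$; $P_{\max}>0$. The channel of user $k$ depends on $\mathbf{s}_k$ only, $\mathsf{H}_k(\mathbf{r})=\mathsf{H}(\mathbf{r},\mathbf{s}_k)$, with \[ \mathsf{H}(\mathbf{r},\mathbf{s})=\sqrt{\frac{\mathbf{e}_r^T(\mathbf{s}-\mathbf{r})}{\|\mathbf{r}-\mathbf{s}\|}}\cdot\frac{jk_0\eta e^{-jk_0\|\mathbf{r}-\mathbf{s}\|}}{4\pi\|\mathbf{r}-\mathbf{s}\|}\left(1+\frac{j/k_0}{\|\mathbf{r}-\mathbf{s}\|}-\frac{1/k_0^2}{\|\mathbf{r}-\mathbf{s}\|^2}\right), \] where $\mathbf{e}_r$ is the normal vector of the base-station aperture, $\eta=120\pi$, $k_0=2\pi/\lambda$. It is known that an optimal beamforming lies in the span of $\mathsf{H}_1^*,\dots,\mathsf{H}_K^*$, so it is represented by $\mathbf{B}$; the policy $F_{\mathsf{P}}$ is treated as a well-defined function of $\mathbf{S}$. A permutation matrix $\boldsymbol{\Pi}$ reorders rows via $\boldsymbol{\Pi}^T\mathbf{S}$. *)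

(* Defs.v *)
From HB Require Import structures.
From mathcomp Require Import all_boot all_order all_algebra all_fingroup.
From mathcomp Require Import all_classical all_reals all_analysis.
From mathcomp Require Import complex.
Set Implicit Arguments. Unset Strict Implicit. Unset Printing Implicit Defensive.
Import Order.TTheory GRing.Theory Num.Theory.
Local Open Scope classical_set_scope.
Local Open Scope ring_scope.

Section Defs.
Variable R : realType.

(* points of R^3, as a product type so that Lebesgue measure is available *)
Definition pt3 := ((R * R) * R)%type.

Definition px (p : pt3) : R := p.1.1.
Definition py (p : pt3) : R := p.1.2.
Definition pz (p : pt3) : R := p.2.

Definition dot3 (p q : pt3) : R := px p * px q + py p * py q + pz p * pz q.
Definition sub3 (p q : pt3) : pt3 := ((px p - px q, py p - py q), pz p - pz q).
Definition norm3 (p : pt3) : R := Num.sqrt (dot3 p p).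

Definition pt_of_row (v : 'rV[R]_3) : pt3 := ((v 0 0, v 0 1), v 0 2).

Definition leb3 := ((@lebesgue_measure R \x @lebesgue_measure R) \x @lebesgue_measure R)%E.

Definition cint (A : set pt3) (f : pt3 -> R[i]) : R[i] :=
  (Rintegral leb3 A (fun r => complex.Re (f r)) +i* Rintegral leb3 A (fun r => complex.Im (f r)))%C.

Definition nsq (z : R[i]) : R := complex.Re z ^+ 2 + complex.Im z ^+ 2.

Definition cexpi (x : R) : R[i] := (cos x +i* sin x)%C.

(* channel H(r, s); er = normal of the BS aperture, k0 = 2 pi / lambda, eta = 120 pi *)
Definition chan (lambda : R) (er : pt3) (r s : pt3) : R[i] :=
  let k0 := 2 * pi / lambda in
  let eta := 120 * pi in
  let d := norm3 (sub3 r s) in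
  ((Num.sqrt (dot3 er (sub3 s r) / d))%:C
   * ((0 +i* (k0 * eta)) * cexpi (- (k0 * d)) / (4 * pi * d)%:C)
   * (1 + (0 +i* (1 / k0 / d)) - (1 / k0 ^+ 2 / d ^+ 2)%:C))%C.

Definition upos (K : nat) (S : 'M[R]_(K, 3)) (k : 'I_K) : pt3 := pt_of_row (row k S).

Definition beam_of (lambda : R) (er : pt3) (K : nat) (S : 'M[R]_(K, 3))
  (B : 'M[R[i]]_K) (k : 'I_K) (r : pt3) : R[i] :=
  \sum_(j < K) B j k * ((chan lambda er r (upos S j))^*)%C.

Definition sum_rate (Aset : set pt3) (Aar sigma2 lambda : R) (er : pt3) (K : nat)
  (S : 'M[R]_(K, 3)) (V : 'I_K -> pt3 -> R[i]) : R :=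
  \sum_(k < K)
    let I j := nsq (cint Aset (fun r => chan lambda er r (upos S k) * V j r)) in
    ln (1 + Aar * I k / (\sum_(j < K | j != k) Aar * I j + sigma2)) / ln 2.

Definition feasible (Aset : set pt3) (Pmax : R) (K : nat) (V : 'I_K -> pt3 -> R[i]) : Prop :=
  (forall k, measurable_fun Aset (fun r => complex.Re (V k r))
          /\ measurable_fun Aset (fun r => complex.Im (V k r))
          /\ leb3.-integrable Aset (fun r => (nsq (V k r))%:E))
  /\ \sum_(k < K) Rintegral leb3 Aset (fun r => nsq (V k r)) = Pmax.

Definition optimal_B (Aset : set pt3) (Aar sigma2 Pmax lambda : R) (er : pt3) (K : nat)
  (S : 'M[R]_(K, 3)) (B : 'M[R[i]]_K) : Prop :=
  feasible Aset Pmax (beam_of lambda er S B)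
  /\ forall V, feasible Aset Pmax V ->
       sum_rate Aset Aar sigma2 lambda er S V
       <= sum_rate Aset Aar sigma2 lambda er S (beam_of lambda er S B).

End Defs.

(* Main.v *)
Require Import Defs.
From HB Require Import structures.
From mathcomp Require Import all_boot all_order all_algebra all_fingroup.
From mathcomp Require Import all_classical all_reals all_analysis.
From mathcomp Require Import complex.
Import Order.TTheory GRing.Theory Num.Theory.
Local Open Scope classical_set_scope.
Local Open Scope ring_scope.

Section Aux.
Variables (R : realType) (K : nat) (Aset : set (pt3 R)) (er : pt3 R)
  (Aar sigma2 Pmax lambda : R).

Lemma rate_perm (S S2 : 'M[R]_(K, 3)) (p : 'S_K) :
  (forall k, upos S2 k = upos S (p k)) ->
  forall V, sum_rate Aset Aar sigma2 lambda er S2 V =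
            sum_rate Aset Aar sigma2 lambda er S (fun k => V (p^-1 k)%g).
Proof.
move=> hS V; rewrite /sum_rate.
rewrite [RHS](reindex_inj (@perm_inj _ p)).
apply: eq_bigr => k _.
rewrite hS /= permK.
rewrite [in RHS](reindex_inj (@perm_inj _ p)).
under [in RHS]eq_bigr => j _ do rewrite permK.
under [in RHS]eq_bigl => j do rewrite (inj_eq (@perm_inj _ p)).
by [].
Qed.

Lemma feas_perm (p : 'S_K) V :
  feasible Aset Pmax (fun k => V (p k)) <-> feasible Aset Pmax V.
Proof.
rewrite /feasible; split=> [[h1 h2]|[h1 h2]]; split.
- by move=> k; have := h1 (p^-1 k)%g; rewrite permKV.
- by rewrite -h2 (reindex_inj (@perm_inj _ p)).
- by move=> k; apply: h1.
- by rewrite -h2 [RHS](reindex_inj (@perm_inj _ p)).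
Qed.

Lemma beam_perm (S S2 : 'M[R]_(K, 3)) (B B2 : 'M[R[i]]_K) (p : 'S_K) :
  (forall k, upos S2 k = upos S (p k)) ->
  (forall i k, B2 i k = B (p i) (p k)) ->
  beam_of lambda er S2 B2 = (fun k => beam_of lambda er S B (p k)).
Proof.
move=> hS hB; apply/funext => k; apply/funext => r.
rewrite /beam_of [RHS](reindex_inj (@perm_inj _ p)) /=.
by apply: eq_bigr => j _; rewrite hS hB.
Qed.

Lemma opt_perm (S S2 : 'M[R]_(K, 3)) (B B2 : 'M[R[i]]_K) (p : 'S_K) :
  (forall k, upos S2 k = upos S (p k)) ->
  (forall i k, B2 i k = B (p i) (p k)) ->
  optimal_B Aset Aar sigma2 Pmax lambda er S B <->
  optimal_B Aset Aar sigma2 Pmax lambda er S2 B2.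
Proof.
move=> hS hB; rewrite /optimal_B (@beam_perm S S2 B B2 p hS hB) feas_perm.
have e1 : sum_rate Aset Aar sigma2 lambda er S2
            (fun k => beam_of lambda er S B (p k)) =
          sum_rate Aset Aar sigma2 lambda er S (beam_of lambda er S B).
  rewrite (@rate_perm S S2 p hS); congr sum_rate.
  by apply/funext => k; rewrite permKV.
rewrite e1; split=> -[hf hopt]; (split; first exact: hf); move=> V hV.
- rewrite (@rate_perm S S2 p hS); apply: hopt.
  by rewrite -(feas_perm p); under eq_fun do rewrite permK.
- have := hopt (fun k => V (p k)); rewrite (@rate_perm S S2 p hS).
  have -> : (fun k => V (p (p^-1 k)%g)) = V.
    by apply/funext => k; rewrite permKV.
  by apply; rewrite feas_perm.
Qed.
End Aux.

Theorem proposition2 (R : realType) (K : nat) (Aset : set (pt3 R)) (er : pt3 R)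
  (Aar sigma2 Pmax lambda : R)
  (hAset : measurable Aset) (hA : 0 < Aar) (hsigma : 0 < sigma2)
  (hP : 0 < Pmax) (hlambda : 0 < lambda)
  (S : 'M[R]_(K, 3)) (B : 'M[complex R]_K) (s : 'S_K) :
  optimal_B Aset Aar sigma2 Pmax lambda er S B <->
  optimal_B Aset Aar sigma2 Pmax lambda er ((perm_mx s)^T *m S)
    ((perm_mx s)^T *m B *m perm_mx s).
Proof.
apply: (@opt_perm R K Aset er Aar sigma2 Pmax lambda _ _ _ _ (s^-1)%g).
- move=> k; rewrite /upos tr_perm_mx -row_permE /pt_of_row.
  by rewrite !mxE.
- move=> i k; rewrite tr_perm_mx -row_permE -[s in perm_mx s]invgK -col_permE.
  by rewrite !mxE.
Qed.
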